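(* Let $d$ be a positive integer, let $\varepsilon>0$, and let $\omega_N\subset\mathbb{S}^{d-1}$ be a set of $N\ge 3$ distinct points. Assume that for any three distinct points $x,y,z\in\omega_N$, $$\langle x,y\rangle\langle x,z\rangle\langle y,z\rangle\le-\varepsilon.$$ Then $N\le 1+\frac{1}{\varepsilon}$.
   Context: $\langle\cdot,\cdot\rangle$ is the Euclidean inner product and $\mathbb{S}^{d-1}$ is the unit sphere in $\mathbb{R}^d$. *)

(* Defs.v *)
From HB Require Import structures.
From mathcomp Require Import all_boot all_order all_algebra.
From mathcomp Require Import reals.
Set Implicit Arguments. Unset Strict Implicit. Unset Printing Implicit Defensive.
Import Order.TTheory GRing.Theory Num.Theory.
Local Open Scope ring_scope.

Definition dotp (R : realType) (d : nat) (u v : 'rV[R]_d) : R :=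
  \sum_(i < d) u 0 i * v 0 i.

Definition on_sphere (R : realType) (d : nat) (u : 'rV[R]_d) : Prop :=
  dotp u u = 1.

(* Main.v *)
Require Import Defs.
From HB Require Import structures.
From mathcomp Require Import all_boot all_order all_algebra.
From mathcomp Require Import reals.
From mathcomp Require Import ring lra zify.
Import Order.TTheory GRing.Theory Num.Theory.
Local Open Scope ring_scope.

Lemma dot2 (R : realType) d (u v : 'rV[R]_d) :
  2 * dotp u v <= dotp u u + dotp v v /\ - (2 * dotp u v) <= dotp u u + dotp v v.
Proof.
rewrite /dotp -big_split /= mulr_sumr -sumrN; split; apply: ler_sum => k _.
  by have := sqr_ge0 (u 0 k - v 0 k); rewrite sqrrB; lra.
by have := sqr_ge0 (u 0 k + v 0 k); rewrite sqrrD; lra.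
Qed.

Lemma dot_le1 (R : realType) d (u v : 'rV[R]_d) :
  on_sphere u -> on_sphere v -> `|dotp u v| <= 1.
Proof.
rewrite /on_sphere => hu hv; have [h1 h2] := dot2 _ _ u v; rewrite hu hv in h1 h2.
rewrite ler_norml; apply/andP; split; lra.
Qed.

Lemma dotC (R : realType) d (u v : 'rV[R]_d) : dotp u v = dotp v u.
Proof. by rewrite /dotp; apply: eq_bigr => k _; rewrite mulrC. Qed.

Lemma gram (R : realType) d N (x : 'I_N -> 'rV[R]_d) (t : 'I_N -> R) :
  0 <= \sum_i \sum_j t i * t j * dotp (x i) (x j).
Proof.
have -> : \sum_i \sum_j t i * t j * dotp (x i) (x j) =
  \sum_(k < d) (\sum_i t i * x i 0 k) * (\sum_j t j * x j 0 k).
  transitivity (\sum_i \sum_j \sum_(k < d) (t i * x i 0 k) * (t j * x j 0 k)).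
    apply: eq_bigr => i _; apply: eq_bigr => j _; rewrite /dotp mulr_sumr.
    by apply: eq_bigr => k _; ring.
  rewrite (eq_bigr (fun i => \sum_(k < d) \sum_j (t i * x i 0 k) * (t j * x j 0 k))); last by move=> i _; rewrite exchange_big.
  rewrite exchange_big /=; apply: eq_bigr => k _.
  rewrite big_distrl /=; apply: eq_bigr => i _; by rewrite big_distrr.
by apply: sumr_ge0 => k _; rewrite -expr2 sqr_ge0.
Qed.

Theorem lemma3p4 (R : realType) (d N : nat) (eps : R)
  (x : 'I_N -> 'rV[R]_d) :
  (0 < d)%N -> 0 < eps -> (3 <= N)%N ->
  injective x ->
  (forall i, on_sphere (x i)) ->
  (forall i j k, i != j -> i != k -> j != k ->
     dotp (x i) (x j) * dotp (x i) (x k) * dotp (x j) (x k) <= - eps) ->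
  (N%:R : R) <= 1 + 1 / eps.
Proof.
move=> _ heps hN _ hs hT.
have hN0 : (0 < N)%N by apply: leq_trans hN.
pose i0 : 'I_N := Ordinal hN0.
have habs : forall i j, i != j -> eps <= `|dotp (x i) (x j)|.
  move=> i j hij.
  have : (0 < #|[predC pred2 i j]|)%N.
    have := cardC (pred2 i j); rewrite card2 hij card_ord => h.
    move: h; set m := #|[predC _]|; move=> h; lia.
  case/card_gt0P => k; rewrite !inE negb_or => /andP [hki hkj].
  have := hT i j k hij ltac:(by rewrite eq_sym) ltac:(by rewrite eq_sym).
  have := dot_le1 _ _ _ _ (hs i) (hs k); have := dot_le1 _ _ _ _ (hs j) (hs k).
  set a := dotp (x i) (x j); set b := dotp (x i) (x k); set c := dotp (x j) (x k) => hc hb hP.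
  have h1 : eps <= `|a * b * c| by rewrite -normrN; apply: le_trans (ler_norm _); lra.
  rewrite !normrM in h1.
  apply: (le_trans h1); rewrite -mulrA. apply: ler_piMr => //.
  by apply: mulr_ile1.
pose t i := if i == i0 then 1 else if dotp (x i0) (x i) < 0 then (1:R) else -1.
have ht : forall i, `|t i| = 1.
  by move=> i; rewrite /t; case: (i == i0); last case: (_ < 0); rewrite ?normrN normr1.
have hnz : forall i j, i != j -> dotp (x i) (x j) != 0.
  move=> i j /habs h; apply/eqP => h0; rewrite h0 normr0 in h; lra.
have hsgn : forall i j, i != j -> t i * t j * dotp (x i) (x j) < 0.
  move=> i j hij.
  have hij0 := hnz i j hij.
  case: (eqVneq i i0) => [hi | hi].
    subst i; have hj : j != i0 by rewrite eq_sym.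
    rewrite /t eqxx (negbTE hj).
    move: hij0; case: (ltrP (dotp (x i0) (x j)) 0) => ha hne; first lra.
    have : 0 < dotp (x i0) (x j) by rewrite lt_def hne ha.
    lra.
  case: (eqVneq j i0) => [hj | hj].
    subst j; rewrite /t eqxx (negbTE hi) dotC.
    move: hij0; rewrite dotC; case: (ltrP (dotp (x i0) (x i)) 0) => ha hne; first lra.
    have : 0 < dotp (x i0) (x i) by rewrite lt_def hne ha.
    lra.
  have := hT i0 i j ltac:(by rewrite eq_sym) ltac:(by rewrite eq_sym) hij.
  have := hnz i0 i ltac:(by rewrite eq_sym); have := hnz i0 j ltac:(by rewrite eq_sym).
  rewrite /t (negbTE hi) (negbTE hj).
  set a := dotp (x i) (x j); set b := dotp (x i0) (x i); set c := dotp (x i0) (x j).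
  move=> hc hb hP.
  have hbc : b * c * a < 0 by lra.
  case: (ltrP b 0) => hb'; case: (ltrP c 0) => hc'.
  - rewrite !mul1r. rewrite ltNge; apply/negP => ha; suff : 0 <= b * c * a by lra.
    by rewrite mulr_ge0 // nmulr_rge0 // ltW.
  - have hc2 : 0 < c by rewrite lt_def hc hc'.
    rewrite mul1r mulN1r oppr_lt0 ltNge; apply/negP => ha; suff : 0 <= b * c * a by lra.
    by rewrite mulr_le0 // nmulr_rle0 // ltW.
  - have hb2 : 0 < b by rewrite lt_def hb hb'.
    rewrite mulr1 mulN1r oppr_lt0 ltNge; apply/negP => ha; suff : 0 <= b * c * a by lra.
    by rewrite mulr_le0 // pmulr_rle0 // ltW.
  - have hb2 : 0 < b by rewrite lt_def hb hb'.
    have hc2 : 0 < c by rewrite lt_def hc hc'.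
    rewrite mulrNN !mul1r; rewrite ltNge; apply/negP => ha; suff : 0 <= b * c * a by lra.
    by rewrite mulr_ge0 // mulr_ge0 // ltW.
have hoff : forall i j, i != j -> t i * t j * dotp (x i) (x j) <= - eps.
  move=> i j hij; have h := hsgn i j hij; have e := habs i j hij.
  rewrite -[X in X <= _]opprK -(ltr0_norm h) !normrM !ht !mul1r; lra.
have hdiag : forall i, t i * t i * dotp (x i) (x i) = 1.
  move=> i; rewrite (hs i : dotp _ _ = 1) mulr1 /t.
  by case: (i == i0); last case: (_ < 0); rewrite ?mulrNN mulr1.
have hterm : forall i j, t i * t j * dotp (x i) (x j) <= (if j == i then 1 + eps else 0) - eps.
  move=> i j; case: (eqVneq j i) => [->|h]; first by rewrite hdiag; lra.
  by rewrite sub0r; apply: hoff; rewrite eq_sym.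
have hrow : forall i, \sum_j t i * t j * dotp (x i) (x j) <= (1 + eps) - N%:R * eps.
  move=> i; apply: le_trans (ler_sum _ (fun j _ => hterm i j)) _.
  rewrite sumrB (bigD1 i) //= eqxx big1 ?addr0; last by move=> j /negbTE ->.
  by rewrite sumr_const card_ord mulr_natl lexx.
have := gram _ _ _ x t.
move/le_trans/(_ (ler_sum _ (fun i _ => hrow i))).
rewrite sumr_const card_ord => h0.
have hNpos : (0 : R) < N%:R by rewrite ltr0n.
have hK : 0 <= 1 + eps - N%:R * eps.
  by rewrite -(pmulr_rge0 _ hNpos) [N%:R * (_ - _)]mulr_natl.
have he : (1 / eps) * eps = 1 by rewrite mul1r mulVf // gt_eqF.
have he0 : 0 < 1 / eps by rewrite divr_gt0.
set e := 1 / eps in he he0 *.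
nra.
Qed.
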